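(* Let $(\mathcal{Y},\eta)$ be an $(n,m)$-voltage operator, let $\operatorname{Aut}(\mathcal{Y},\eta)$ be the subgroup of $\operatorname{Aut}(\mathcal{Y})$ of all $\tau$ with $\eta(W\tau)=\eta(W)$ for every $W\in\Pi(\mathcal{Y})$, and let $\mathcal{X}$ be an $n$-premaniplex. Let $\operatorname{Aut}(\mathcal{X})$ act on $\mathcal{X}\rtimes_\eta\mathcal{Y}$ by $(x,y)\mapsto(x\alpha,y)$ and $\operatorname{Aut}(\mathcal{Y},\eta)$ by $(x,y)\mapsto(x,y\tau)$. Then the subgroup of $\operatorname{Aut}(\mathcal{X}\rtimes_\eta\mathcal{Y})$ generated by these two groups is $\operatorname{Aut}(\mathcal{X})\times\operatorname{Aut}(\mathcal{Y},\eta)$, acting by $(x,y)(\alpha,\tau)=(x\alpha,y\tau)$.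
   Context: An $n$-premaniplex is an edge-coloured graph (semi-edges and parallel edges allowed) with colours $\{0,\dots,n-1\}$ such that every vertex (flag) is the start of exactly one dart of each colour, and for $|i-j|\ge2$ alternating $i,j$-paths of length 4 are closed; $x^i$ is the $i$-adjacent flag of $x$. $\mathcal{C}^n=\langle r_0,\dots,r_{n-1}\mid r_i^2,\ (r_ir_j)^2\ (|i-j|\ge2)\rangle$ acts on the left on flags by $r_ix=x^i$. Automorphisms act on the right and map paths to paths, $W\mapsto W\tau$. For a flag $y$ of an $m$-premaniplex $\mathcal{Y}$ and $\omega\in\mathcal{C}^m$, $W_\omega(y)$ is the homotopy class of paths from $y$ whose colour sequence $i_1,\dots,i_k$ satisfies $r_{i_k}\cdots r_{i_1}=\omega$; these form the fundamental groupoid $\Pi(\mathcal{Y})$. A voltage assignment $\eta:\Pi(\mathcal{Y})\to\mathcal{C}^n$ satisfies $\eta(W_1W_2)=\eta(W_2)\eta(W_1)$; $(\mathcal{Y},\eta)$ is an $(n,m)$-voltage operator. $\mathcal{X}\rtimes_\eta\mathcal{Y}$ has flags $\mathcal{X}\times\mathcal{Y}$ and $(x,y)^i=(\eta(W_{r_i}(y))x,r_iy)$, $i\in\{0,\dots,m-1\}$. *)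

(* Defs.v *)
From mathcomp Require Import all_boot.
From Stdlib Require Import Relations.Relation_Operators.
Set Implicit Arguments. Unset Strict Implicit. Unset Printing Implicit Defensive.

(* n-premaniplex: flags with, for each colour i < n, the i-adjacency
   x |-> x^i, an involution (fixed points = semi-edges); alternating
   i,j-paths of length 4 are closed when |i - j| >= 2. *)
Record premaniplex (n : nat) := Premaniplex {
  flag :> Type;
  adj : 'I_n -> flag -> flag;
  adjK : forall i x, adj i (adj i x) = x;
  adj_square : forall (i j : 'I_n), (i.+2 <= j) || (j.+2 <= i) ->
    forall x, adj j (adj i (adj j (adj i x))) = x }.

(* Elements of the Coxeter group C^n = <r_0..r_{n-1} | r_i^2, (r_i r_j)^2 (|i-j|>=2)>
   are represented by words; the word [:: a1; ...; ak] stands for r_a1 * ... * r_ak. *)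
Definition cox_relator (n : nat) (w : seq 'I_n) : Prop :=
  (exists i, w = [:: i; i]) \/
  (exists i j : 'I_n, ((i.+2 <= j) || (j.+2 <= i)) /\ w = [:: i; j; i; j]).

Inductive cox_step (n : nat) : seq 'I_n -> seq 'I_n -> Prop :=
| CoxStep u v w : cox_relator w -> cox_step (u ++ w ++ v) (u ++ v).

(* equality in C^n of the elements represented by two words *)
Definition coxeq (n : nat) : seq 'I_n -> seq 'I_n -> Prop :=
  clos_refl_sym_trans (seq 'I_n) (@cox_step n).

(* left action of C^n on flags: (r_a1 ... r_ak) x = r_a1 (... (r_ak x)), r_i x = x^i *)
Definition act (n : nat) (X : premaniplex n) (w : seq 'I_n) (x : X) : X :=
  foldr (fun a x => adj a x) x w.

(* The fundamental groupoid Pi(Y): the class W_omega(y) is indexed by the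
   pair (y, omega); it ends at omega y, and
   W_omega(y) W_omega'(omega y) = W_(omega' omega)(y).
   A voltage assignment eta : Pi(Y) -> C^n is given by eta y omega = eta(W_omega(y)),
   well defined on group elements and with eta(W1 W2) = eta(W2) eta(W1). *)
Record voltage (n m : nat) (Y : premaniplex m) := Voltage {
  eta :> Y -> seq 'I_m -> seq 'I_n;
  eta_wd : forall y w w', coxeq w w' -> coxeq (eta y w) (eta y w');
  eta_mul : forall y w w',
    coxeq (eta y (w' ++ w)) (eta (act w y) w' ++ eta y w) }.

(* flags of X ⋊_eta Y are pairs; (x,y)^i = (eta(W_{r_i}(y)) x, r_i y) *)
Definition vop_adj (n m : nat) (X : premaniplex n) (Y : premaniplex m)
  (eta : voltage n Y) (i : 'I_m) (p : X * Y) : X * Y :=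
  (act (eta p.2 [:: i]) p.1, adj i p.2).

(* automorphisms (acting on the right, x tau written tau x):
   bijections commuting with all adjacencies *)
Definition is_aut (T : Type) (k : nat) (a : 'I_k -> T -> T) (f : T -> T) : Prop :=
  (exists g, cancel f g /\ cancel g f) /\ (forall i x, f (a i x) = a i (f x)).

(* Aut(Y, eta): automorphisms tau of Y with eta(W tau) = eta(W) for all W;
   W_omega(y) tau = W_omega(y tau). *)
Definition is_eta_aut (n m : nat) (Y : premaniplex m) (eta : voltage n Y)
  (t : Y -> Y) : Prop :=
  is_aut (@adj m Y) t /\ (forall y w, coxeq (eta (t y) w) (eta y w)).

Inductive gen (T : Type) (S : (T -> T) -> Prop) : (T -> T) -> Prop :=
| gen_id : gen S id
| gen_mul f h : S f -> gen S h -> gen S (f \o h)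
| gen_inv f g h : S f -> cancel f g -> cancel g f -> gen S h -> gen S (g \o h).

(* Main.v *)
Require Import Defs.
From mathcomp Require Import all_boot.
From Stdlib Require Import Relations.Relation_Operators.

Lemma act_cat n (X : premaniplex n) u v x : act (u ++ v) x = act u (act v x) :> X.
Proof. by rewrite /act foldr_cat. Qed.

Lemma act_coxeq n (X : premaniplex n) w w' (x : X) : coxeq w w' -> act w x = act w' x.
Proof.
elim=> {w w'} [w w' st| w | w w' _ IH | w1 w2 w3 _ IH1 _ IH2] //.
- case: st => u v r Hr; rewrite !act_cat; congr (act u _).
  case: Hr => [[i ->]|[i [j [Hij ->]]]] /=; first by rewrite adjK.
  by apply: adj_square; rewrite orbC.
- by rewrite IH1.
Qed.

Lemma act_aut n (X : premaniplex n) a w (x : X) :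
  is_aut (@adj n X) a -> a (act w x) = act w (a x).
Proof. move=> [_ Ha]; elim: w => //= i w IH; by rewrite Ha IH. Qed.

Lemma aut_id T k (f : 'I_k -> T -> T) : is_aut f id.
Proof. split=> //; by exists id. Qed.

Lemma aut_comp T k (f : 'I_k -> T -> T) a b : is_aut f a -> is_aut f b -> is_aut f (a \o b).
Proof.
move=> [[ga [a1 a2]] Ha] [[gb [b1 b2]] Hb]; split.
  exists (gb \o ga); split=> x /=; by rewrite ?a1 ?b1 ?b2 ?a2.
by move=> i x /=; rewrite Hb Ha.
Qed.

Lemma aut_inv T k (f : 'I_k -> T -> T) a g : is_aut f a -> cancel a g -> cancel g a -> is_aut f g.
Proof.
move=> [_ Ha] c1 c2; split; first by exists a.
by move=> i x; rewrite -{1}(c2 x) -Ha c1.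
Qed.

Lemma eta_id n m (Y : premaniplex m) (eta : voltage n Y) : is_eta_aut eta id.
Proof. split; first exact: aut_id. by move=> y w; apply: rst_refl. Qed.

Lemma eta_comp n m (Y : premaniplex m) (eta : voltage n Y) a b :
  is_eta_aut eta a -> is_eta_aut eta b -> is_eta_aut eta (a \o b).
Proof.
move=> [Ha Ea] [Hb Eb]; split; first exact: aut_comp.
move=> y w /=; apply: rst_trans (Ea _ _) (Eb _ _).
Qed.

Lemma eta_inv n m (Y : premaniplex m) (eta : voltage n Y) a g :
  is_eta_aut eta a -> cancel a g -> cancel g a -> is_eta_aut eta g.
Proof.
move=> [Ha Ea] c1 c2; split; first exact: aut_inv Ha c1 c2.
move=> y w; apply: rst_sym; have := Ea (g y) w; by rewrite c2.
Qed.

Theorem corollary6p2 (n m : nat) (X : premaniplex n) (Y : premaniplex m)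
  (eta : voltage n Y) (x0 : X) (y0 : Y) :
  let adjXY := @vop_adj n m X Y eta in
  let S := fun h : X * Y -> X * Y =>
    (exists a, is_aut (@adj n X) a /\ h = (fun p => (a p.1, p.2))) \/
    (exists t, is_eta_aut eta t /\ h = (fun p => (p.1, t p.2))) in
  (* (x,y)(alpha,tau) = (x alpha, y tau) is an automorphism of X ⋊ Y *)
  (forall a t, is_aut (@adj n X) a -> is_eta_aut eta t ->
     is_aut adjXY (fun p => (a p.1, t p.2))) /\
  (* the action of Aut(X) x Aut(Y,eta) is faithful *)
  (forall a t a' t', is_aut (@adj n X) a -> is_eta_aut eta t ->
     is_aut (@adj n X) a' -> is_eta_aut eta t' ->
     (forall p : X * Y, (a p.1, t p.2) = (a' p.1, t' p.2)) ->
     (forall x, a x = a' x) /\ (forall y, t y = t' y)) /\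
  (* the generated subgroup is exactly the image of Aut(X) x Aut(Y,eta) *)
  (forall h, gen S h -> exists a t, is_aut (@adj n X) a /\ is_eta_aut eta t /\
     forall p, h p = (a p.1, t p.2)) /\
  (forall a t, is_aut (@adj n X) a -> is_eta_aut eta t ->
     exists h, gen S h /\ forall p, h p = (a p.1, t p.2)).
Proof.
move=> adjXY S; split; last split; last split.
- move=> a t Ha Ht; have Ha' := Ha; have Ht' := Ht.
  case: Ha' => [[ga [a1 a2]] HA]; case: Ht' => [[[gt [t1 t2]] HT] ET]; split.
    exists (fun p => (ga p.1, gt p.2)); split=> [[x y]|[x y]] /=; by rewrite ?a1 ?t1 ?a2 ?t2.
  move=> i [x y]; rewrite /adjXY /vop_adj /=; rewrite act_aut // HT; congr pair.
  apply: act_coxeq; apply: rst_sym; apply: ET.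
- move=> a t a' t' _ _ _ _ E; split.
    by move=> x; have := E (x, y0); case.
  by move=> y; have := E (x0, y); case.
- move=> h; elim=> {h}.
  + exists id, id; split; first exact: aut_id; split; first exact: eta_id. by case.
  + move=> f h Sf _ [a [t [Ha [Ht Eh]]]].
    case: Sf => [[b [Hb ->]]|[u [Hu ->]]].
      exists (b \o a), t; split; first exact: aut_comp.
      by split=> // p /=; rewrite Eh.
    exists a, (u \o t); split=> //; split; first exact: eta_comp.
    by move=> p /=; rewrite Eh.
  + move=> f g h Sf c1 c2 _ [a [t [Ha [Ht Eh]]]].
    case: Sf c1 c2 => [[b [Hb ->]]|[u [Hu ->]]] c1 c2.
      pose gb x := (g (x, y0)).1.
      have bK : cancel b gb by move=> x; rewrite /gb -[(b x, y0)]/((fun p => (b p.1, p.2)) (x, y0)) c1.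
      have Kb : cancel gb b by move=> x; rewrite /gb; have := c2 (x, y0); case.
      have Eg : forall p, g p = (gb p.1, p.2).
        move=> p; have := c2 p; case: (g p) => q1 q2 /= <-; by rewrite bK.
      exists (gb \o a), t; split; first by apply: aut_comp => //; apply: aut_inv Hb bK Kb.
      by split=> // p /=; rewrite Eh Eg.
    pose gu y := (g (x0, y)).2.
    have uK : cancel u gu by move=> y; rewrite /gu -[(x0, u y)]/((fun p => (p.1, u p.2)) (x0, y)) c1.
    have Ku : cancel gu u by move=> y; rewrite /gu; have := c2 (x0, y); case.
    have Eg : forall p, g p = (p.1, gu p.2).
      move=> p; have := c2 p; case: (g p) => q1 q2 /= <-; by rewrite uK.
    exists a, (gu \o t); split=> //; split; first by apply: eta_comp => //; apply: eta_inv Hu uK Ku.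
    by move=> p /=; rewrite Eh Eg.
- move=> a t Ha Ht; exists ((fun p => (a p.1, p.2)) \o ((fun p => (p.1, t p.2)) \o id)).
  split; last by case.
  apply: gen_mul; first by left; exists a.
  apply: gen_mul; first by right; exists t.
  exact: gen_id.
Qed.
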